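(* For every real $r>1$, the number $C_r$ of connected components of $\overline{\sigma_{-r}(\mathbb{N})}$ satisfies $C_r\ge 2^{\pi(r-1)}$, where $\pi(x)$ denotes the number of primes at most $x$.
   Context: For real $r>1$, $\sigma_{-r}(n)=\sum_{d\mid n}d^{-r}$ for $n\in\mathbb{N}$, and $\overline{\sigma_{-r}(\mathbb{N})}$ is the closure in $\mathbb{R}$ of its image. $C_r$ is the number of connected components of this closure. *)

(* Defs.v *)
From HB Require Import structures.
From mathcomp Require Import all_boot all_order all_algebra.
From mathcomp Require Import all_classical all_reals all_analysis.
Set Implicit Arguments. Unset Strict Implicit. Unset Printing Implicit Defensive.
Import Order.TTheory GRing.Theory Num.Theory.
Import numFieldNormedType.Exports.
Local Open Scope classical_set_scope.
Local Open Scope ring_scope.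

Definition sigma_neg {R : realType} (r : R) (n : nat) : R :=
  \sum_(d <- divisors n) (d%:R) `^ (- r).

Definition sigma_image {R : realType} (r : R) : set R :=
  [set sigma_neg r n | n in [set n : nat | (0 < n)%N]].

Definition components {T : topologicalType} (A : set T) : set (set T) :=
  connected_component A @` A.

Definition primepi {R : realType} (x : R) : nat :=
  #|[set p : 'I_(Num.truncn x).+1 | prime p && ((p : nat)%:R <= x)]|.

(* Main.v *)
Require Import Defs.
From HB Require Import structures.
From mathcomp Require Import all_boot all_order all_algebra.
From mathcomp Require Import all_classical all_reals all_analysis.
From mathcomp Require Import lra.
Import Order.TTheory GRing.Theory Num.Theory.
Import numFieldNormedType.Exports.
Local Open Scope classical_set_scope.
Local Open Scope ring_scope.

Section A.
Variable R : realType.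

Lemma bern (s x : R) : 0 < s -> 1 < x ->
  s * x `^ (- (s + 1)) < (x - 1) `^ (- s) - x `^ (- s).
Proof.
move=> s0 x1.
have x0 : 0 < x by apply: lt_trans x1.
have q0 : 0 < (x - 1) / x by rewrite divr_gt0 // subr_gt0.
have eq1 : x - 1 = x * ((x - 1) / x) by rewrite mulrC divfK // gt_eqF.
have lnq : ln ((x - 1) / x) <= - x^-1.
  have -> : (x - 1) / x = 1 + (- x^-1) by rewrite mulrBl divff ?gt_eqF // mul1r.
  apply: le_ln1Dx; rewrite ltrNl opprK invf_lt1 //.

have lnq0 : ln ((x - 1) / x) < 0.
  apply: ln_lt0; rewrite q0 /= ltr_pdivrMr // mul1r; lra.
have key : 1 + s / x < ((x - 1) / x) `^ (- s).
  rewrite /powR gt_eqF //.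
  apply: (le_lt_trans _ (expR_gt1Dx _)); last first.
    by rewrite mulf_eq0 negb_or oppr_eq0 gt_eqF //= lt_eqF.

  rewrite lerD2l mulNr -mulrN.
  by rewrite ler_pM2l // lerNr.
rewrite eq1 powRM ?ltW // -[X in _ < _ - X]mulr1 -mulrBr.
have -> : - (s + 1) = - s + - 1 by rewrite opprD.
rewrite powRD; last by apply/implyP => _; rewrite gt_eqF.
rewrite powR_inv1 ?ltW // mulrCA ltr_pM2l ?powR_gt0 //.
by move: key; rewrite -(ltrD2l (-1)) addKr addrC mulrC.
Qed.

Variable r : R.
Hypothesis hr : 1 < r.
Let s := r - 1.
Let s0 : 0 < s. Proof. by rewrite subr_gt0. Qed.
Definition F (d : nat) : R := (d%:R : R) `^ (- r).
Definition G (d : nat) : R := (d%:R : R) `^ (- s) / s.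
Definition B (e : nat) : R := F e.+1 + G e.+1.

Lemma F_ge0 d : 0 <= F d. Proof. exact: powR_ge0. Qed.
Lemma G_ge0 d : 0 <= G d. Proof. by rewrite /G divr_ge0 ?powR_ge0 // ltW. Qed.

Lemma bernF d : (2 <= d)%N -> F d < G d.-1 - G d.
Proof.
move=> d2.
have x1 : 1 < (d%:R : R) by rewrite ltr1n.
have := @bern s _ s0 x1.
have -> : - (s + 1) = - r by rewrite /s subrK.
rewrite -/(F d) => h.
rewrite /G -mulrBl ltr_pdivlMr // mulrC.
by case: d d2 {x1} h => // d _; rewrite -natr1 addrK.
Qed.

Lemma TL1 e j : \sum_(e.+2 <= d < e.+2 + j) F d <= G e.+1 - G (e.+1 + j).
Proof.
elim: j => [|j IH]; first by rewrite addn0 big_geq // addn0 subrr.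
rewrite addnS big_nat_recr /=; last by rewrite leq_addr.
have h2 : (2 <= e.+2 + j)%N by rewrite leq_addr.
apply: (le_trans (lerD IH (ltW (bernF _ h2)))).
by rewrite addSn /= addnS addSn addrA subrK.
Qed.

Lemma TL e N : \sum_(e.+1 <= d < N) F d <= B e.
Proof.
have B0 : 0 <= B e by rewrite addr_ge0 ?F_ge0 ?G_ge0.
case: (leqP N e.+1) => hN; first by rewrite big_geq.
rewrite big_ltn //.
rewrite /B lerD2l.
have -> : N = (e.+2 + (N - e.+2))%N by rewrite subnKC.
apply: (le_trans (TL1 _ _)).
by rewrite gerBl G_ge0.
Qed.

Lemma Bpos e : (1 <= e)%N -> e%:R <= s -> B e < F e.
Proof.
move=> e1 es.
have e0 : 0 < (e%:R : R) by rewrite ltr0n.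
have h := bernF e.+1 e1.
have h' : B e < G e by rewrite /B -(subrK (G e.+1) (G e)) ltrD2r.
apply: (lt_le_trans h' _).
rewrite /F /G.
have -> : - r = - s + - 1 by rewrite /s opprB addrAC subrr add0r.
rewrite powRD; last by apply/implyP => _; rewrite gt_eqF.
rewrite powR_inv1 ?ler0n // ler_pM2l ?powR_gt0 //.
by rewrite lef_pV2 // posrE.
Qed.

Lemma Delta M : M%:R <= s -> exists2 D, 0 < D & forall e, (1 <= e <= M)%N -> D <= F e - B e.
Proof.
elim: M => [|M IH] hM.
  by exists 1 => // e /andP[h1 h2]; move: (leq_trans h1 h2).
have [|D D0 HD] := IH; first by apply: le_trans hM; rewrite ler_nat.
exists (Num.min D (F M.+1 - B M.+1)).
  by rewrite lt_min D0 subr_gt0 Bpos.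
move=> e /andP[e1]; rewrite leq_eqVlt => /orP[/eqP->|eM].
  by rewrite ge_min lexx orbT.
by rewrite ge_min HD ?e1.
Qed.

Definition pre (n e : nat) : R := \sum_(0 <= d < e.+1 | (d %| n)%N) F d.

Lemma sig_range n N : (0 < n)%N -> (n < N)%N ->
  sigma_neg r n = \sum_(0 <= d < N | (d %| n)%N) F d.
Proof.
move=> n0 nN; rewrite /sigma_neg -[RHS]big_filter; rewrite -/(F _).
apply: perm_big; apply: uniq_perm; first exact: divisors_uniq.
  by rewrite filter_uniq // iota_uniq.
move=> d; rewrite mem_filter -dvdn_divisors // mem_iota add0n.
case dn: (d %| n)%N => //=.
by rewrite subn0 (leq_ltn_trans (dvdn_leq n0 dn)).
Qed.

Lemma sig_split n e : (0 < n)%N ->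
  sigma_neg r n = pre n e + \sum_(e.+1 <= d < (n + e).+1 | (d %| n)%N) F d.
Proof.
move=> n0; rewrite (@sig_range n (n + e).+1) //; last by rewrite ltnS leq_addr.
by rewrite /pre -big_cat_nat // ltnS leq_addl.
Qed.

Lemma lo n e : (0 < n)%N -> pre n e <= sigma_neg r n.
Proof.
move=> n0; rewrite (sig_split n e n0) lerDl sumr_ge0 // => i _; exact: F_ge0.
Qed.

Lemma up n e : (0 < n)%N -> sigma_neg r n <= pre n e + B e.
Proof.
move=> n0; rewrite (sig_split n e n0) lerD2l.
apply: le_trans (TL e (n + e).+1).
rewrite big_mkcond /=; apply: ler_sum => i _; case: ifP => _ //; exact: F_ge0.
Qed.

Lemma preS n e : pre n e.+1 = pre n e + (if (e.+1 %| n)%N then F e.+1 else 0).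
Proof. by rewrite /pre big_mkcond big_nat_recr //= -big_mkcond. Qed.

Lemma pre_mono n e e' : (e <= e')%N -> pre n e <= pre n e'.
Proof.
move=> /subnK <-; elim: (e' - e)%N => [|k IH] //.
rewrite addSn preS; apply: le_trans IH _; rewrite lerDl; case: ifP => _ //; exact: F_ge0.
Qed.

Lemma pre_eq n m e : (forall d, (d <= e)%N -> (d %| n)%N = (d %| m)%N) -> pre n e = pre m e.
Proof.
move=> H; rewrite /pre big_nat_cond [RHS]big_nat_cond; apply: eq_bigl => i.
by apply: andb_id2l => /andP[_ hi]; apply: H.
Qed.

Lemma B_ge0 e : 0 <= B e. Proof. by rewrite addr_ge0 ?F_ge0 ?G_ge0. Qed.

Lemma normge (eps x y : R) : eps <= x - y \/ eps <= y - x -> eps <= `|x - y|.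
Proof.
rewrite ler_normr opprB => -[->|->] //; by rewrite orbT.
Qed.

Lemma gap a b m : (0 < a)%N -> (0 < b)%N -> (1 <= m)%N -> m%:R <= s ->
  (m %| a)%N -> ~~ (m %| b)%N -> (forall d, (d < m)%N -> (d %| a)%N = (d %| b)%N) ->
  exists y eps, [/\ 0 < eps, sigma_neg r b < y < sigma_neg r a &
     forall n, (0 < n)%N -> eps <= `|sigma_neg r n - y| ].
Proof.
move=> a0 b0 m1 ms ma mb hab.
have [D D0 HD] := Delta m ms.
case: m m1 ms ma mb hab HD => // m' _ ms ma mb hab HD.
set c := pre a m'.
have preA : pre a m'.+1 = c + F m'.+1 by rewrite preS ma.
have preB : pre b m'.+1 = c.
  rewrite preS (negbTE mb) addr0 /c; apply/esym/pre_eq => d hd; apply: hab.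
  by rewrite ltnS.
have HDm := HD m'.+1 (leqnn _).
have Bm := B_ge0 m'.+1.
have fa := lo a m'.+1 a0; have fb := up b m'.+1 b0.
exists (c + F m'.+1 - D / 2), (D / 2); split.
- by rewrite divr_gt0.
- apply/andP; split; lra.
move=> n n0.
apply: normge.
case: (boolP [exists e : 'I_m'.+2, (e %| n)%N != (e %| a)%N]); last first.
  rewrite negb_exists => /forallP hall.
  have : pre n m'.+1 = pre a m'.+1.
    apply: pre_eq => d hd; have := hall (Ordinal (hd : (d < m'.+2)%N)).
    by rewrite negbK => /eqP.
  have := lo n m'.+1 n0; lra.
case/existsP => e0 he0.
have exP : exists e, (e <= m'.+1)%N && ((e %| n)%N != (e %| a)%N).
  by exists e0; rewrite he0 -ltnS ltn_ord.
case: (ex_minnP exP) => e /andP[em ne] emin.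
have agree : forall d, (d < e)%N -> (d %| n)%N = (d %| a)%N.
  move=> d de; case: (boolP ((d %| n)%N == (d %| a)%N)) => [/eqP//|nd].
  have := emin d; rewrite (leq_trans (ltnW de) em) nd => /(_ isT).
  by rewrite leqNgt de.
have e1 : (0 < e)%N.
  by case: e ne {em emin agree} => //; rewrite !dvd0n (gtn_eqF n0) (gtn_eqF a0).
have es : e%:R <= s by apply: le_trans ms; rewrite ler_nat.
have HDe := HD e (andb_true_intro (conj e1 em)).
case: e e1 em ne emin agree es HDe => // e' _ em ne emin agree es HDe.
have preN : pre n e' = pre a e'.
  by apply: pre_eq => d hd; apply: agree; rewrite ltnS.
move: em; rewrite leq_eqVlt => /orP[/eqP em|em].
  move: em ne agree preN HDe => [->] ne agree preN HDe.
  rewrite ma in ne; have nn : (m'.+1 %| n)%N = false by move: ne; case: (_ %| n)%N.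
  have := preS n m'; rewrite nn addr0 preN -/c => hp.
  have := up n m'.+1 n0; lra.
have hab' := hab e'.+1 em.
case hn: (e'.+1 %| n)%N.
  rewrite hn in ne; have ha : (e'.+1 %| a)%N = false by move: ne; case: (_ %| a)%N.
  have := preS n e'; rewrite hn preN => hpn.
  have := preS a e'; rewrite ha addr0 => hpa.
  have := lo n e'.+1 n0; have := up a e'.+1 a0; lra.
rewrite hn in ne; have ha : (e'.+1 %| a)%N = true by move: ne; case: (e'.+1 %| a)%N.
have := preS n e'; rewrite hn preN addr0 => hpn.
have := preS a e'; rewrite ha => hpa.
have := @pre_mono a e'.+1 m' em; rewrite -/c => hmono.
have := up n e'.+1 n0; lra.
Qed.
End A.

Local Open Scope card_scope.

Lemma comp_neq (R : realType) (r : R) (a b : nat) (y eps : R) :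
  (0 < a)%N -> (0 < b)%N -> 0 < eps -> sigma_neg r b < y < sigma_neg r a ->
  (forall n, (0 < n)%N -> eps <= `|sigma_neg r n - y|) ->
  connected_component (closure (sigma_image r)) (sigma_neg r a) <>
  connected_component (closure (sigma_image r)) (sigma_neg r b).
Proof.
move=> a0 b0 e0 /andP[hb ha] hn heq.
set C := closure (sigma_image r).
have inC n : (0 < n)%N -> C (sigma_neg r n).
  by move=> n0; apply: subset_closure; exists n.
set K := connected_component C (sigma_neg r a).
have Ka : K (sigma_neg r a) by apply: connected_component_refl; apply: inC.
have Kb : K (sigma_neg r b) by rewrite /K heq; apply: connected_component_refl; apply: inC.
have : is_interval K by apply/connected_intervalP; apply: component_connected.
move=> /(_ _ _ Kb Ka y); rewrite !ltW // => /(_ isT) Ky.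
have Cy : C y by apply: connected_component_sub Ky.
have [z [[n n0 <-] bz]] := Cy _ (nbhsx_ballx y eps e0).
move: bz; rewrite -ball_normE /ball_ /= distrC => bz.
by have := hn n n0; rewrite leNgt bz.
Qed.

Lemma first_diff (a b p : nat) : (0 < a)%N -> (0 < b)%N -> (p %| a)%N != (p %| b)%N ->
  exists m, [/\ (0 < m)%N, (m <= p)%N, (m %| a)%N != (m %| b)%N &
    forall d, (d < m)%N -> (d %| a)%N = (d %| b)%N].
Proof.
move=> a0 b0 hp.
have exP : exists m, (m %| a)%N != (m %| b)%N by exists p.
case: (ex_minnP exP) => m hm mmin.
exists m; split => //.
- by case: m hm {mmin} => //; rewrite !dvd0n (gtn_eqF a0) (gtn_eqF b0).
- exact: mmin.
- move=> d dm; case: (boolP ((d %| a)%N == (d %| b)%N)) => [/eqP//|nd].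
  by have := mmin d nd; rewrite leqNgt dm.
Qed.

Theorem mainTheorem3 (R : realType) (r : R) (hr : 1 < r) :
  `I_ (2 ^ primepi (r - 1))%N #<= components (closure (sigma_image r)).
Proof.
pose L := Num.truncn (r - 1).
pose A := [set p : 'I_L.+1 | prime p && ((p : nat)%:R <= r - 1)]%SET.
have -> : primepi (r - 1) = #|A|.
  rewrite /primepi; apply: eq_card => x; rewrite !inE; apply/idP/idP; rewrite in_setE //.
have -> : (2 ^ #|A|)%N = #|powerset A| by rewrite card_powerset.
set PS := enum (powerset A).
pose N (T : {set 'I_L.+1}) := (\prod_(p in T) (p : nat))%N.
have PSsub i : (i < #|powerset A|)%N -> nth finset.set0 PS i \subset A.
  move=> hi; have : nth finset.set0 PS i \in PS by rewrite mem_nth // -cardE.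
  by rewrite mem_enum inE.
have Npos (T : {set 'I_L.+1}) : T \subset A -> (0 < N T)%N.
  move=> TA; apply: prodn_cond_gt0 => p pT; have := fintype.subsetP TA p pT.
  by rewrite inE => /andP[/prime_gt0].
have Ndvd (T : {set 'I_L.+1}) (p : 'I_L.+1) : T \subset A -> prime p -> (p %| N T)%N = (p \in T).
  move=> TA pp; rewrite Euclid_dvd_prod // big_orE; apply/existsP/idP.
    case=> q /andP[qT]; have := fintype.subsetP TA q qT; rewrite inE => /andP[qp _].
    by rewrite dvdn_prime2 // => /eqP/val_inj ->.
  by move=> pT; exists p; rewrite pT dvdnn.
pose f i := connected_component (closure (sigma_image r)) (sigma_neg r (N (nth finset.set0 PS i))).
have : $|{injfun `I_#|powerset A| >-> components (closure (sigma_image r))}|.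
  apply/injfunPex; exists f.
    move=> i hi; exists (sigma_neg r (N (nth finset.set0 PS i))) => //.
    by apply: subset_closure; exists (N (nth finset.set0 PS i)) => //; apply: Npos; apply: PSsub.
  move=> i j; rewrite !in_setE /= => hi hj fij; apply/eqP; apply: contraT => nij.
  move: fij; rewrite /f.
  set Ti := nth finset.set0 PS i; set Tj := nth finset.set0 PS j => fij.
  have TiA := PSsub i hi; have TjA := PSsub j hj.
  have neT : Ti != Tj.
    by rewrite /Ti /Tj nth_uniq ?enum_uniq // -cardE.
  have [p hp] : exists p, (p \in Ti) != (p \in Tj).
    apply/existsP; apply: contraR neT => /existsPn h; apply/eqP/finset.setP => p.
    by have := h p; rewrite negbK => /eqP.
  have pA : p \in A.
    by move: hp; case pi: (p \in Ti) => /= pj;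
      [apply: (fintype.subsetP TiA) | apply: (fintype.subsetP TjA); rewrite negbK in pj].
  move: (pA); rewrite inE => /andP[pp pr].
  have hdiff : (p %| N Ti)%N != (p %| N Tj)%N by rewrite !Ndvd.
  have [m [m1 mp mdiff magree]] := @first_diff _ _ p (Npos _ TiA) (Npos _ TjA) hdiff.
  have ms : m%:R <= r - 1 by apply: le_trans pr; rewrite ler_nat.
  case hm: (m %| N Ti)%N.
    have mj : ~~ (m %| N Tj)%N by move: mdiff; rewrite hm; case: (_ %| _)%N.
    have [y [eps [e0 yb hn]]] := @gap R r hr _ _ _ (Npos _ TiA) (Npos _ TjA) m1 ms hm mj magree.
    by have := @comp_neq R r _ _ _ _ (Npos _ TiA) (Npos _ TjA) e0 yb hn.
  have mj : (m %| N Tj)%N by move: mdiff; rewrite hm; case: (_ %| _)%N.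
  have magree' : forall d, (d < m)%N -> (d %| N Tj)%N = (d %| N Ti)%N.
    by move=> d dm; rewrite magree.
  have [y [eps [e0 yb hn]]] := @gap R r hr _ _ _ (Npos _ TjA) (Npos _ TiA) m1 ms mj (negbT hm) magree'.
  by have := @comp_neq R r _ _ _ _ (Npos _ TjA) (Npos _ TiA) e0 yb hn; rewrite fij.
by case=> g; apply: inj_card_le g.
Qed.
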